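(* Let $G=A*_C B$ with $|C\backslash A/C|\ge 3$ and $|B/C|\ge 2$, with generating set $S=(A\cup B)\setminus\{1\}$. Then there exist words $w_i$ ($i=0,1,2,\dots$) in $S$ such that: (1) for every $i\ge0$ and $n\ge1$, $h_{w_i}(\overline{w_i^n})=n$; (2) for every $j>i\ge 0$ and $n\ge 1$, $h_{w_j}(\overline{w_i^n})=0$; (3) for every $i\ge 0$, $\overline{w_i}\in[G,G]$.
   Context: $G=A*_C B$ is an amalgamated free product ($C$ a common subgroup of $A$, $B$); $|C\backslash A/C|$ is the number of double cosets. Words are finite sequences of letters in $S$; $\bar u$ is the element represented, $|u|$ the length, $u^{-1}$ the formal inverse word, and $|g|$ the word length of $g\in G$. For a nonempty word $w$ and a word $u$, $|u|_w$ is the maximal number of pairwise non-overlapping occurrences of $w$ as a contiguous subword of $u$. For $g\in G$, $c_w(g)=|g|-\min\{|u|-|u|_w : \bar u=g\}$ and $h_w(g)=c_w(g)-c_{w^{-1}}(g)$. *)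

(* Defs.v *)
From Stdlib Require Import List Arith ZArith ClassicalEpsilon.
Import ListNotations.

Record Group := {
  carrier :> Type;
  gmul : carrier -> carrier -> carrier;
  gone : carrier;
  ginv : carrier -> carrier;
  gmulA : forall x y z, gmul x (gmul y z) = gmul (gmul x y) z;
  gmul1g : forall x, gmul gone x = x;
  gmulVg : forall x, gmul (ginv x) x = gone
}.

Arguments gmul {g}.
Arguments gone {g}.
Arguments ginv {g}.

Section GroupDefs.
Variable G : Group.

Definition is_subgroup (P : G -> Prop) : Prop :=
  P gone /\ (forall x y, P x -> P y -> P (gmul x y)) /\ (forall x, P x -> P (ginv x)).

Definition commutator (a b : G) : G := gmul (gmul (ginv a) (ginv b)) (gmul a b).

Inductive in_derived : G -> Prop :=
| der_one : in_derived gone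
| der_comm : forall a b, in_derived (commutator a b)
| der_mul : forall x y, in_derived x -> in_derived y -> in_derived (gmul x y)
| der_inv : forall x, in_derived x -> in_derived (ginv x).

Definition same_dcoset (C : G -> Prop) (x y : G) : Prop :=
  exists c1 c2, C c1 /\ C c2 /\ y = gmul (gmul c1 x) c2.

Definition at_least_3_double_cosets (C A : G -> Prop) : Prop :=
  exists a1 a2 a3, A a1 /\ A a2 /\ A a3 /\
    ~ same_dcoset C a1 a2 /\ ~ same_dcoset C a1 a3 /\ ~ same_dcoset C a2 a3.

Definition same_lcoset (C : G -> Prop) (x y : G) : Prop :=
  exists c, C c /\ y = gmul x c.

Definition at_least_2_left_cosets (B C : G -> Prop) : Prop :=
  exists b1 b2, B b1 /\ B b2 /\ ~ same_lcoset C b1 b2.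
End GroupDefs.

Definition hom_on (G H : Group) (P : G -> Prop) (f : G -> H) : Prop :=
  forall x y, P x -> P y -> f (gmul x y) = gmul (f x) (f y).

Definition is_hom (G H : Group) (f : G -> H) : Prop :=
  forall x y, f (gmul x y) = gmul (f x) (f y).

(* G is the (internal) amalgamated free product A *_C B of its subgroups A
   and B over C = A ∩ B: universal property of the pushout. *)
Definition is_amalgam (G : Group) (A B : G -> Prop) : Prop :=
  is_subgroup G A /\ is_subgroup G B /\
  forall (H : Group) (f1 f2 : G -> H),
    hom_on G H A f1 -> hom_on G H B f2 ->
    (forall c, A c -> B c -> f1 c = f2 c) ->
    (exists F : G -> H, is_hom G H F /\
        (forall a, A a -> F a = f1 a) /\ (forall b, B b -> F b = f2 b)) /\
    (forall F1 F2 : G -> H, is_hom G H F1 -> is_hom G H F2 ->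
        (forall a, A a -> F1 a = f1 a) -> (forall b, B b -> F1 b = f2 b) ->
        (forall a, A a -> F2 a = f1 a) -> (forall b, B b -> F2 b = f2 b) ->
        forall g, F1 g = F2 g).

(* least / greatest natural number satisfying P (meaningful when it exists) *)
Definition natmin (P : nat -> Prop) : nat :=
  epsilon (inhabits 0) (fun m => P m /\ forall k, P k -> m <= k).
Definition natmax (P : nat -> Prop) : nat :=
  epsilon (inhabits 0) (fun m => P m /\ forall k, P k -> k <= m).

Fixpoint has_occ {T : Type} (w u : list T) (k : nat) : Prop :=
  match k with
  | 0 => True
  | S k' => exists x y, u = x ++ w ++ y /\ has_occ w y k'
  end.

Definition occ {T : Type} (w u : list T) : nat := natmax (fun k => has_occ w u k).

Section Words.
Variables (G : Group) (A B : G -> Prop).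

Definition gen_S (g : G) : Prop := (A g \/ B g) /\ g <> gone.

Definition is_word (u : list G) : Prop := Forall gen_S u.

Definition eval (u : list G) : G := fold_right gmul gone u.

Definition winv (u : list G) : list G := rev (map ginv u).

Definition wpow (u : list G) (n : nat) : list G := concat (repeat u n).

Definition wlen (g : G) : nat :=
  natmin (fun m => exists u, is_word u /\ eval u = g /\ length u = m).

Definition c_w (w : list G) (g : G) : Z :=
  (Z.of_nat (wlen g) -
   Z.of_nat (natmin (fun m => exists u, is_word u /\ eval u = g /\
                                        m = (length u - occ w u)%nat)))%Z.

Definition h_w (w : list G) (g : G) : Z := (c_w w g - c_w (winv w) g)%Z.
End Words.

(* Main.v *)
Require Import Defs.
From Stdlib Require Import List Arith ZArith Lia Classical ClassicalEpsilon FunctionalExtensionality PropExtensionality ProofIrrelevance.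
Import ListNotations.
Inductive ltr := Lp | LP | Lq | LQ | Lb | LB.

Definition chunk (bit : bool) : list ltr := if bit then [Lq; Lb; LQ; LB] else [Lp; Lb; LP; LB].
Definition cbits (k : nat) : list bool := repeat false k ++ [true; true; false; true].
Definition ws (k : nat) : list ltr := flat_map chunk (cbits k).
Definition linv1 (a : ltr) : ltr :=
  match a with Lp => LP | LP => Lp | Lq => LQ | LQ => Lq | Lb => LB | LB => Lb end.
Definition linv (u : list ltr) : list ltr := rev (map linv1 u).
Definition lpow (u : list ltr) (n : nat) : list ltr := concat (repeat u n).
Definition ichunk (bit : bool) : list ltr := linv (chunk bit).

Definition cb (k r : nat) : bool :=
  if r <? k then false else match r - k with 0 => true | 1 => true | 2 => false | _ => true end.

Lemma chunk_len b : length (chunk b) = 4. Proof. destruct b; reflexivity. Qed.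
Lemma ichunk_len b : length (ichunk b) = 4. Proof. destruct b; reflexivity. Qed.

Lemma flat_map_len4 (f : bool -> list ltr) l : (forall b, length (f b) = 4) ->
  length (flat_map f l) = 4 * length l.
Proof. intro H. induction l; simpl; auto. rewrite length_app, H, IHl. lia. Qed.

Lemma nth_flat_map4 (f : bool -> list ltr) l m d : (forall b, length (f b) = 4) ->
  m < 4 * length l -> nth m (flat_map f l) d = nth (m mod 4) (f (nth (m / 4) l false)) d.
Proof.
  intro H. revert m. induction l as [|b l IH]; intros m Hm. simpl in Hm; lia.
  change (flat_map f (b :: l)) with (f b ++ flat_map f l).
  change (length (b :: l)) with (S (length l)) in Hm.
  destruct (Nat.lt_ge_cases m 4) as [h|h].
  - rewrite app_nth1 by (rewrite H; auto). rewrite Nat.mod_small by auto.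
    rewrite Nat.div_small by auto. auto.
  - rewrite app_nth2 by (rewrite H; auto). rewrite H. rewrite IH by lia.
    assert (E1 : m / 4 = S ((m - 4) / 4)).
    { replace m with (1 * 4 + (m - 4)) at 1 by lia. rewrite Nat.div_add_l by lia. lia. }
    assert (E2 : m mod 4 = (m - 4) mod 4).
    { replace m with ((m - 4) + 1 * 4) at 1 by lia. apply Nat.Div0.mod_add. }
    rewrite E1, E2. reflexivity.
Qed.

Lemma nth_concat_repeat (u : list ltr) n m d : u <> [] -> m < n * length u ->
  nth m (concat (repeat u n)) d = nth (m mod length u) u d.
Proof.
  intro Hu. revert m. induction n as [|n IH]; intros m Hm. simpl in Hm; lia.
  change (concat (repeat u (S n))) with (u ++ concat (repeat u n)).
  change (S n * length u) with (length u + n * length u) in Hm.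
  assert (L : length u > 0) by (destruct u; simpl; [tauto|lia]).
  destruct (Nat.lt_ge_cases m (length u)) as [h|h].
  - rewrite app_nth1 by auto. rewrite Nat.mod_small; auto.
  - rewrite app_nth2 by auto. rewrite IH by lia.
    replace m with ((m - length u) + 1 * length u) at 2 by lia. rewrite Nat.Div0.mod_add. auto.
Qed.

Lemma nth_cbits k r : r < k + 4 -> nth r (cbits k) false = cb k r.
Proof.
  intro H. unfold cbits, cb. destruct (Nat.ltb_spec r k).
  - rewrite app_nth1 by (rewrite repeat_length; auto). apply nth_repeat.
  - rewrite app_nth2 by (rewrite repeat_length; auto). rewrite repeat_length.
    destruct (r - k) as [|[|[|[|x]]]] eqn:E; simpl; auto. lia.
Qed.

Lemma cbits_len k : length (cbits k) = k + 4.
Proof. unfold cbits. rewrite length_app, repeat_length. auto. Qed.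
Lemma ws_len k : length (ws k) = 4 * (k + 4).
Proof. unfold ws. rewrite flat_map_len4 by apply chunk_len. rewrite cbits_len. auto. Qed.

Lemma linv_app u1 u2 : linv (u1 ++ u2) = linv u2 ++ linv u1.
Proof. unfold linv. rewrite map_app, rev_app_distr. auto. Qed.
Lemma linv_flat_map l : linv (flat_map chunk l) = flat_map ichunk (rev l).
Proof.
  induction l as [|b l IH]; simpl; auto. rewrite linv_app, IH, flat_map_app. simpl.
  rewrite app_nil_r. auto.
Qed.
Lemma linv_len u : length (linv u) = length u.
Proof. unfold linv. rewrite length_rev, length_map. auto. Qed.

Lemma nth_ws k j : j < 4 * (k + 4) -> nth j (ws k) Lb = nth (j mod 4) (chunk (cb k (j / 4))) Lb.
Proof.
  intro H. unfold ws. rewrite nth_flat_map4. rewrite nth_cbits. auto.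
  apply Nat.Div0.div_lt_upper_bound. lia. apply chunk_len. rewrite cbits_len. lia.
Qed.

Lemma rev_cbits k : rev (cbits k) = [true; false; true; true] ++ repeat false k.
Proof. unfold cbits. rewrite rev_app_distr, rev_repeat. reflexivity. Qed.

Lemma nth_linvws k j : j < 4 * (k + 4) ->
  nth j (linv (ws k)) Lb = nth (j mod 4) (ichunk (nth (j / 4) (rev (cbits k)) false)) Lb.
Proof.
  intro H. unfold ws. rewrite linv_flat_map. rewrite nth_flat_map4. auto. apply ichunk_len.
  rewrite length_rev, cbits_len. lia.
Qed.

Lemma pat_ws k e : e < k -> nth (4 * e) (ws k) Lb = Lp.
Proof.
  intro H. rewrite nth_ws by lia. replace (4 * e) with (e * 4) by lia.
  rewrite Nat.Div0.mod_mul, Nat.div_mul by lia. unfold cb.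
  destruct (Nat.ltb_spec e k); [reflexivity|lia].
Qed.

Lemma nth_revbits k e : e < k -> nth (4 + e) (rev (cbits k)) false = false.
Proof. intro. rewrite rev_cbits. simpl. apply nth_repeat. Qed.

Lemma pat_linv k e d : e < k -> d < 4 ->
  nth (16 + 4 * e + d) (linv (ws k)) Lb = nth d [Lb; Lp; LB; LP] Lb.
Proof.
  intros H Hd. rewrite nth_linvws by lia.
  replace (16 + 4 * e + d) with (d + (4 + e) * 4) by lia.
  rewrite Nat.Div0.mod_add, Nat.div_add by lia. rewrite Nat.mod_small, Nat.div_small by lia.
  rewrite Nat.add_0_l, nth_revbits; auto.
Qed.

Lemma pat_linv5 k : nth 5 (linv (ws k)) Lb = Lp.
Proof. rewrite nth_linvws by lia. simpl. rewrite rev_cbits. reflexivity. Qed.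

Section Col.
Variable col : ltr -> nat.
Hypothesis col_p : col Lp = 0.
Hypothesis col_q : col Lq = 1.
Hypothesis col_b : col Lb = 2.
Hypothesis col_B : col LB = 2.
Hypothesis col_PQ : (col LP = 0 /\ col LQ = 1) \/ (col LP = 1 /\ col LQ = 0).
Variable k : nat.
Hypothesis Hk : 2 <= k.

Let K := k + 4.
Definition colchunk (b : bool) (r : nat) : nat := col (nth r (chunk b) Lb).
Definition tcol (m : nat) : nat := colchunk (cb k ((m / 4) mod K)) (m mod 4).

Lemma tcol_text n m : m < length (lpow (ws k) n) ->
  col (nth m (lpow (ws k) n) Lb) = tcol m.
Proof.
  intro Hm.
  assert (HL : length (lpow (ws k) n) = n * length (ws k)).
  { unfold lpow. clear Hm. induction n; simpl; auto. rewrite length_app, IHn. lia. }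
  rewrite HL in Hm. unfold lpow. rewrite nth_concat_repeat; auto.
  2: { intro E. pose proof (ws_len k) as H. rewrite E in H. simpl in H. lia. }
  rewrite ws_len. unfold ws at 1. rewrite nth_flat_map4.
  2: apply chunk_len.
  2: { rewrite cbits_len. apply Nat.mod_upper_bound. lia. }
  rewrite Nat.Div0.mod_mul_r.
  assert (Ha : m mod 4 < 4) by (apply Nat.mod_upper_bound; lia).
  assert (Hc : (m / 4) mod (k + 4) < k + 4) by (apply Nat.mod_upper_bound; lia).
  set (a := m mod 4) in *. set (c := (m / 4) mod (k + 4)) in *.
  replace ((a + 4 * c) mod 4) with a by (apply Nat.mod_unique with c; lia).
  replace ((a + 4 * c) / 4) with c by (apply Nat.div_unique with a; lia).
  rewrite nth_cbits by lia. reflexivity.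
Qed.

Lemma tcol_eq q x r : r < 4 -> tcol (4 * (q * K + x) + r) = colchunk (cb k (x mod K)) r.
Proof.
  intro Hr. unfold tcol.
  replace ((4 * (q * K + x) + r) / 4) with (q * K + x) by (apply Nat.div_unique with r; lia).
  replace ((4 * (q * K + x) + r) mod 4) with r by (apply Nat.mod_unique with (q * K + x); lia).
  rewrite Nat.add_comm, Nat.Div0.mod_add. reflexivity.
Qed.

Lemma modK1 x : x < K -> x mod K = x.
Proof. intro; apply Nat.mod_small; auto. Qed.
Lemma modK2 x : K <= x < 2 * K -> x mod K = x - K.
Proof. intro. symmetry. apply Nat.mod_unique with 1; lia. Qed.

Lemma decomp s : exists q rho r, rho < K /\ r < 4 /\ s = 4 * (q * K + rho) + r.
Proof.
  exists ((s / 4) / K), ((s / 4) mod K), (s mod 4).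
  split. apply Nat.mod_upper_bound; unfold K; lia.
  split. apply Nat.mod_upper_bound; lia.
  pose proof (Nat.div_mod s 4 ltac:(lia)). pose proof (Nat.div_mod (s / 4) K ltac:(unfold K; lia)). lia.
Qed.

Lemma find_true rho : rho < K -> exists e, e <= k /\ cb k ((rho + e) mod K) = true.
Proof.
  intro H. unfold K in *.
  destruct (Nat.le_gt_cases rho k) as [h|h].
  - exists (k - rho). split. lia. rewrite modK1 by (unfold K; lia). unfold cb.
    replace (rho + (k - rho)) with k by lia. rewrite Nat.ltb_irrefl, Nat.sub_diag. auto.
  - assert (rho = k + 1 \/ rho = k + 2 \/ rho = k + 3) as [E|[E|E]] by lia; subst rho.
    + exists 0. split. lia. rewrite modK1 by (unfold K; lia). unfold cb.
      destruct (Nat.ltb_spec (k + 1 + 0) k). lia. replace (k + 1 + 0 - k) with 1 by lia. auto.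
    + exists 1. split. lia. rewrite modK1 by (unfold K; lia). unfold cb.
      destruct (Nat.ltb_spec (k + 2 + 1) k). lia. replace (k + 2 + 1 - k) with 3 by lia. auto.
    + exists 0. split. lia. rewrite modK1 by (unfold K; lia). unfold cb.
      destruct (Nat.ltb_spec (k + 3 + 0) k). lia. replace (k + 3 + 0 - k) with 3 by lia. auto.
Qed.

Lemma find_false rho : rho < K -> exists e, e <= k /\ cb k ((rho + e) mod K) = false.
Proof.
  intro H. unfold K in *.
  destruct (Nat.lt_ge_cases rho k) as [h|h].
  - exists 0. split. lia. rewrite modK1 by (unfold K; lia). unfold cb.
    destruct (Nat.ltb_spec (rho + 0) k); auto. lia.
  - assert (rho = k \/ rho = k + 1 \/ rho = k + 2 \/ rho = k + 3) as [E|[E|[E|E]]] by lia; subst rho.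
    + exists 2. split. lia. rewrite modK1 by (unfold K; lia). unfold cb.
      destruct (Nat.ltb_spec (k + 2) k). lia. replace (k + 2 - k) with 2 by lia. auto.
    + exists 1. split. lia. rewrite modK1 by (unfold K; lia). unfold cb.
      destruct (Nat.ltb_spec (k + 1 + 1) k). lia. replace (k + 1 + 1 - k) with 2 by lia. auto.
    + exists 0. split. lia. rewrite modK1 by (unfold K; lia). unfold cb.
      destruct (Nat.ltb_spec (k + 2 + 0) k). lia. replace (k + 2 + 0 - k) with 2 by lia. auto.
    + exists 1. split. lia. rewrite modK2 by (unfold K; lia). unfold cb.
      replace (k + 3 + 1 - K) with 0 by (unfold K; lia).
      destruct (Nat.ltb_spec 0 k); auto. lia.
Qed.

Lemma cc_true0 : colchunk true 0 = 1. Proof. apply col_q. Qed.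
Lemma cc_false0 : colchunk false 0 = 0. Proof. apply col_p. Qed.
Lemma cc_odd b r : r = 1 \/ r = 3 -> colchunk b r = 2.
Proof. intros [-> | ->]; destruct b; simpl; auto. Qed.
Lemma cc_true2 : colchunk true 2 = col LQ. Proof. reflexivity. Qed.
Lemma cc_false2 : colchunk false 2 = col LP. Proof. reflexivity. Qed.

Lemma tcol_at q rho e r : r < 4 -> tcol (4 * (q * K + rho) + r + 4 * e) = colchunk (cb k ((rho + e) mod K)) r.
Proof.
  intro Hr. replace (4 * (q * K + rho) + r + 4 * e) with (4 * (q * K + (rho + e)) + r) by lia.
  apply tcol_eq; auto.
Qed.

Lemma runB s : ~ (forall e, e <= k -> tcol (s + 4 * e) = 0).
Proof.
  intro H. destruct (decomp s) as [q [rho [r [Hrho [Hr E]]]]]. subst s.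
  assert (r = 0 \/ r = 2 \/ r = 1 \/ r = 3) as [R|[R|R]] by lia.
  - subst r. destruct (find_true rho Hrho) as [e [He Hb]].
    specialize (H e He). rewrite tcol_at in H by lia. rewrite Hb, cc_true0 in H. discriminate.
  - subst r. destruct col_PQ as [[H1 H2]|[H1 H2]].
    + destruct (find_true rho Hrho) as [e [He Hb]].
      specialize (H e He). rewrite tcol_at in H by lia. rewrite Hb, cc_true2 in H. congruence.
    + destruct (find_false rho Hrho) as [e [He Hb]].
      specialize (H e He). rewrite tcol_at in H by lia. rewrite Hb, cc_false2 in H. congruence.
  - specialize (H 0 ltac:(lia)). rewrite tcol_at in H by lia. rewrite cc_odd in H; [discriminate|].
    lia.
Qed.

Lemma find_true' rho : rho < K -> rho <> 0 -> exists e, e < k /\ cb k ((rho + e) mod K) = true.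
Proof.
  intros H H0. unfold K in *.
  destruct (Nat.le_gt_cases rho k) as [h|h].
  - exists (k - rho). split. lia. rewrite modK1 by (unfold K; lia). unfold cb.
    replace (rho + (k - rho)) with k by lia. rewrite Nat.ltb_irrefl, Nat.sub_diag. auto.
  - assert (rho = k + 1 \/ rho = k + 2 \/ rho = k + 3) as [E|[E|E]] by lia; subst rho.
    + exists 0. split. lia. rewrite modK1 by (unfold K; lia). unfold cb.
      destruct (Nat.ltb_spec (k + 1 + 0) k). lia. replace (k + 1 + 0 - k) with 1 by lia. auto.
    + exists 1. split. lia. rewrite modK1 by (unfold K; lia). unfold cb.
      destruct (Nat.ltb_spec (k + 2 + 1) k). lia. replace (k + 2 + 1 - k) with 3 by lia. auto.
    + exists 0. split. lia. rewrite modK1 by (unfold K; lia). unfold cb.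
      destruct (Nat.ltb_spec (k + 3 + 0) k). lia. replace (k + 3 + 0 - k) with 3 by lia. auto.
Qed.

Lemma runA s : (forall e, e < k -> tcol (s + 4 * e) = 0 /\ tcol (s + 4 * e + 2) = col LP) ->
  exists q, s = 4 * (q * K).
Proof.
  intro H. destruct (decomp s) as [q [rho [r [Hrho [Hr E]]]]]. subst s.
  assert (r = 0 \/ r = 2 \/ r = 1 \/ r = 3) as [R|[R|R]] by lia.
  - subst r. destruct (Nat.eq_dec rho 0) as [->|h0].
    + exists q. lia.
    + destruct (find_true' rho Hrho h0) as [e [He Hb]].
      destruct (H e He) as [H1 _]. rewrite tcol_at in H1 by lia. rewrite Hb, cc_true0 in H1. discriminate.
  - subst r. exfalso. destruct col_PQ as [[H1 H2]|[H1 H2]].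
    + destruct (find_true rho Hrho) as [e [He Hb]].
      destruct (Nat.eq_dec e k) as [->|hne].
      * destruct (H (k - 1) ltac:(lia)) as [_ H3].
        replace (4 * (q * K + rho) + 2 + 4 * (k - 1) + 2) with (4 * (q * K + rho) + 0 + 4 * k) in H3 by lia.
        rewrite tcol_at in H3 by lia. rewrite Hb, cc_true0 in H3. congruence.
      * destruct (H e ltac:(lia)) as [H3 _]. rewrite tcol_at in H3 by lia. rewrite Hb, cc_true2 in H3. congruence.
    + destruct (find_false rho Hrho) as [e [He Hb]].
      destruct (Nat.eq_dec e k) as [->|hne].
      * destruct (H (k - 1) ltac:(lia)) as [_ H3].
        replace (4 * (q * K + rho) + 2 + 4 * (k - 1) + 2) with (4 * (q * K + rho) + 0 + 4 * k) in H3 by lia.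
        rewrite tcol_at in H3 by lia. rewrite Hb, cc_false0 in H3. congruence.
      * destruct (H e ltac:(lia)) as [H3 _]. rewrite tcol_at in H3 by lia. rewrite Hb, cc_false2 in H3. congruence.
  - exfalso. destruct (H 0 ltac:(lia)) as [H1 _]. rewrite tcol_at in H1 by lia. rewrite cc_odd in H1; [discriminate|].
    lia.
Qed.

Lemma anchor q : 1 <= q -> tcol (4 * (q * K) - 12) = 1.
Proof.
  intro Hq. replace (4 * (q * K) - 12) with (4 * ((q - 1) * K + 0) + 0 + 4 * (k + 1)) by (unfold K; nia).
  rewrite tcol_at by lia. rewrite modK1 by (unfold K; lia). unfold cb.
  destruct (Nat.ltb_spec (0 + (k + 1)) k). lia. replace (0 + (k + 1) - k) with 1 by lia. apply cc_true0.
Qed.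

Definition matchAt (V T : list ltr) (o : nat) : Prop :=
  o + length V <= length T /\ forall j, j < length V -> col (nth j V Lb) = col (nth (o + j) T Lb).

Lemma noA n o : ~ matchAt (linv (ws k)) (lpow (ws k) n) o.
Proof.
  intros [Hlen Hm]. rewrite linv_len, ws_len in *.
  assert (Hrun : forall e, e < k -> tcol (o + 17 + 4 * e) = 0 /\ tcol (o + 17 + 4 * e + 2) = col LP).
  { intros e He. split.
    - rewrite <- (tcol_text n) by lia. replace (o + 17 + 4 * e) with (o + (16 + 4 * e + 1)) by lia.
      rewrite <- Hm by lia. rewrite pat_linv by lia. apply col_p.
    - rewrite <- (tcol_text n) by lia. replace (o + 17 + 4 * e + 2) with (o + (16 + 4 * e + 3)) by lia.
      rewrite <- Hm by lia. rewrite pat_linv by lia. reflexivity. }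
  destruct (runA (o + 17) Hrun) as [q Hq].
  assert (1 <= q) by (destruct q; simpl in Hq; lia).
  pose proof (anchor q H) as Ha. replace (4 * (q * K) - 12) with (o + 5) in Ha by lia.
  rewrite <- (tcol_text n) in Ha by lia. rewrite <- Hm in Ha by lia.
  rewrite pat_linv5, col_p in Ha. discriminate.
Qed.

Lemma noB1 k' n o : k < k' -> ~ matchAt (ws k') (lpow (ws k) n) o.
Proof.
  intros Hkk [Hlen Hm]. rewrite ws_len in *. apply (runB o). intros e He.
  rewrite <- (tcol_text n) by lia. rewrite <- Hm by lia. rewrite pat_ws by lia. apply col_p.
Qed.

Lemma noB2 k' n o : k < k' -> ~ matchAt (linv (ws k')) (lpow (ws k) n) o.
Proof.
  intros Hkk [Hlen Hm]. rewrite linv_len, ws_len in *. apply (runB (o + 17)). intros e He.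
  rewrite <- (tcol_text n) by lia. replace (o + 17 + 4 * e) with (o + (16 + 4 * e + 1)) by lia.
  rewrite <- Hm by lia. rewrite pat_linv by lia. apply col_p.
Qed.

End Col.

Lemma natmin_spec (P : nat -> Prop) : (exists m, P m) -> P (natmin P) /\ forall k, P k -> natmin P <= k.
Proof.
  intro H. unfold natmin.
  apply (epsilon_spec (inhabits 0) (fun m => P m /\ forall k, P k -> m <= k)).
  destruct H as [m Hm]. revert Hm. induction m as [m IH] using lt_wf_ind. intro Hm.
  destruct (classic (exists k, P k /\ k < m)) as [[k [Hk Hlt]]|Hno].
  - apply (IH k Hlt Hk).
  - exists m. split; auto. intros k Hk. destruct (le_lt_dec m k); auto.
    exfalso; apply Hno; eauto.
Qed.

Lemma natmax_spec (P : nat -> Prop) : (exists m, P m) -> (exists b, forall k, P k -> k <= b) ->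
  P (natmax P) /\ forall k, P k -> k <= natmax P.
Proof.
  intros [m Hm] [b Hb]. unfold natmax.
  apply (epsilon_spec (inhabits 0) (fun m => P m /\ forall k, P k -> k <= m)).
  assert (forall d m, P m -> b - m <= d -> exists M, P M /\ forall k, P k -> k <= M).
  { induction d; intros m' Hm' Hd.
    - exists m'. split; auto. intros k Hk. pose proof (Hb k Hk). lia.
    - destruct (classic (exists k, P k /\ m' < k)) as [[k [Hk Hlt]]|Hno].
      + apply (IHd k Hk). specialize (Hb k Hk). lia.
      + exists m'. split; auto. intros k Hk. destruct (le_lt_dec k m'); auto.
        exfalso; apply Hno; eauto. }
  eapply H; eauto.
Qed.

Section Amalg.
Variable G : Group.
Local Notation "x ** y" := (@gmul G x y) (at level 40, left associativity).
Local Notation "1" := (@gone G).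
Local Notation inv := (@ginv G).

Lemma mA (x y z : G) : x ** (y ** z) = (x ** y) ** z.
Proof. exact (gmulA G x y z). Qed.
Lemma m1l (x : G) : 1 ** x = x.
Proof. exact (gmul1g G x). Qed.
Lemma mVl (x : G) : inv x ** x = 1.
Proof. exact (gmulVg G x). Qed.
Lemma mVr (x : G) : x ** inv x = 1.
Proof.
  rewrite <- (m1l (x ** inv x)).
  rewrite <- (mVl (inv x)) at 1.
  rewrite <- mA, (mA (inv x) x (inv x)), mVl, m1l. apply mVl.
Qed.
Lemma m1r (x : G) : x ** 1 = x.
Proof. rewrite <- (mVl x), mA, mVr, m1l. reflexivity. Qed.
Lemma invK (x : G) : inv (inv x) = x.
Proof.
  rewrite <- (m1r (inv (inv x))), <- (mVl x), mA, mVl, m1l. reflexivity.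
Qed.
Lemma inv_uniq (x y : G) : x ** y = 1 -> y = inv x.
Proof.
  intro H. rewrite <- (m1l y), <- (mVl x), <- mA, H, m1r. reflexivity.
Qed.
Lemma invM (x y : G) : inv (x ** y) = inv y ** inv x.
Proof.
  symmetry. apply inv_uniq. rewrite <- mA, (mA y), mVr, m1l, mVr. reflexivity.
Qed.
Lemma inv1 : inv 1 = 1.
Proof. symmetry. apply inv_uniq. apply m1l. Qed.
Lemma mKl (x y : G) : inv x ** (x ** y) = y.
Proof. rewrite mA, mVl, m1l. reflexivity. Qed.
Lemma mKr (x y : G) : x ** (inv x ** y) = y.
Proof. rewrite mA, mVr, m1l. reflexivity. Qed.
Lemma mKl' (x y : G) : (y ** x) ** inv x = y.
Proof. rewrite <- mA, mVr, m1r. reflexivity. Qed.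
Lemma mKr' (x y : G) : (y ** inv x) ** x = y.
Proof. rewrite <- mA, mVl, m1r. reflexivity. Qed.

Section Sub.
Variable P : G -> Prop.
Hypothesis HP : is_subgroup G P.
Lemma sg1 : P 1. Proof. apply HP. Qed.
Lemma sgM x y : P x -> P y -> P (x ** y). Proof. apply HP. Qed.
Lemma sgV x : P x -> P (inv x). Proof. apply HP. Qed.
Lemma sgVr x : P (inv x) -> P x. Proof. intro H. rewrite <- invK. apply sgV, H. Qed.
Lemma sgMl x y : P x -> P (x ** y) -> P y.
Proof. intros H1 H2. rewrite <- (mKl x y). apply sgM; [apply sgV|]; auto. Qed.
Lemma sgMr x y : P y -> P (x ** y) -> P x.
Proof. intros H1 H2. rewrite <- (mKl' y x). apply sgM; [|apply sgV]; auto. Qed.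
End Sub.


Variables A B : G -> Prop.
Hypothesis HA : is_subgroup G A.
Hypothesis HB : is_subgroup G B.
Definition Cs (x : G) : Prop := A x /\ B x.
Lemma HC : is_subgroup G Cs.
Proof.
  unfold Cs; split; [|split].
  - split; apply sg1; auto.
  - intros x y [] []; split; apply sgM; auto.
  - intros x []; split; apply sgV; auto.
Qed.
Lemma Cs1 : Cs 1. Proof. apply sg1, HC. Qed.
Lemma CsM x y : Cs x -> Cs y -> Cs (x ** y). Proof. apply sgM, HC. Qed.
Lemma CsV x : Cs x -> Cs (inv x). Proof. apply sgV, HC. Qed.
Lemma CA x : Cs x -> A x. Proof. intros []; auto. Qed.
Lemma CB x : Cs x -> B x. Proof. intros []; auto. Qed.

Definition dec (P : Prop) : {P} + {~ P} := excluded_middle_informative P.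

Definition rp (g : G) : G :=
  if dec (Cs g) then 1 else epsilon (inhabits 1) (fun t => exists c, Cs c /\ t = g ** c).

Lemma rp_spec g : exists c, Cs c /\ rp g = g ** c.
Proof.
  unfold rp. destruct (dec (Cs g)) as [h|h].
  - exists (inv g). split. apply CsV; auto. rewrite mVr; auto.
  - apply (epsilon_spec (inhabits 1) (fun t => exists c, Cs c /\ t = g ** c)).
    exists g, 1. split. apply Cs1. rewrite m1r; auto.
Qed.

Lemma CsM_iff g c : Cs c -> (Cs (g ** c) <-> Cs g).
Proof.
  intro Hc. split; intro H.
  - eapply sgMr; [apply HC| exact Hc | exact H].
  - apply CsM; auto.
Qed.

Lemma rp_coset g c : Cs c -> rp (g ** c) = rp g.
Proof.
  intro Hc. unfold rp.
  destruct (dec (Cs (g ** c))) as [h1|h1]; destruct (dec (Cs g)) as [h2|h2]; auto.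
  - exfalso. apply h2. apply (proj1 (CsM_iff g c Hc) h1).
  - exfalso. apply h1. apply (proj2 (CsM_iff g c Hc) h2).
  - f_equal. extensionality t. apply propositional_extensionality. split.
    + intros [c' [H1 H2]]. exists (c ** c'). split. apply CsM; auto.
      rewrite H2, mA; auto.
    + intros [c' [H1 H2]]. exists (inv c ** c'). split. apply CsM; auto. apply CsV; auto.
      rewrite H2, <- mA, mKr; auto.
Qed.

Lemma rp_C c : Cs c -> rp c = 1.
Proof. intro H. unfold rp. destruct (dec (Cs c)); tauto. Qed.

Lemma rp_idem g : rp (rp g) = rp g.
Proof. destruct (rp_spec g) as [c [Hc E]]. rewrite E at 1. rewrite rp_coset; auto. Qed.

Lemma rp_k g : Cs (inv (rp g) ** g).
Proof.
  destruct (rp_spec g) as [c [Hc E]]. rewrite E, invM, <- mA, mVl, m1r.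
  apply CsV; auto.
Qed.

Lemma rp_kK g : rp g ** (inv (rp g) ** g) = g.
Proof. apply mKr. Qed.

Definition isF (P : G -> Prop) := P = A \/ P = B.

Lemma isF_sub P : isF P -> is_subgroup G P.
Proof. intros [-> | ->]; auto. Qed.
Lemma isF_C P x : isF P -> Cs x -> P x.
Proof. intros [-> | ->] []; auto. Qed.

Lemma rp_in P g : isF P -> P g -> P (rp g).
Proof.
  intros HP Hg. destruct (rp_spec g) as [c [Hc E]]. rewrite E.
  apply sgM; auto. apply isF_sub; auto. apply isF_C; auto.
Qed.
Lemma rp_Cs g : Cs (rp g) <-> Cs g.
Proof. destruct (rp_spec g) as [c [Hc E]]. rewrite E. apply CsM_iff; auto. Qed.

Definition sd := same_dcoset G Cs.

Lemma sd_refl x : sd x x.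
Proof. exists 1, 1. split; [|split]; try apply Cs1. rewrite m1l, m1r; auto. Qed.
Lemma sd_sym x y : sd x y -> sd y x.
Proof.
  intros [c1 [c2 [H1 [H2 E]]]]. exists (inv c1), (inv c2).
  split; [|split]; try (apply CsV; auto).
  rewrite E, mA, mKl, mKl'. auto.
Qed.
Lemma sd_trans x y z : sd x y -> sd y z -> sd x z.
Proof.
  intros [c1 [c2 [H1 [H2 E]]]] [d1 [d2 [K1 [K2 F]]]].
  exists (d1 ** c1), (c2 ** d2). split; [|split]; try (apply CsM; auto).
  rewrite F, E. rewrite !mA. auto.
Qed.
Lemma sd_mk c1 x c2 : Cs c1 -> Cs c2 -> sd x (c1 ** x ** c2).
Proof. intros; exists c1, c2; auto. Qed.
Lemma sd_F P x y : isF P -> sd x y -> P x -> P y.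
Proof.
  intros HP [c1 [c2 [H1 [H2 E]]]] Hx. subst y.
  assert (HS := isF_sub P HP).
  apply sgM; auto. apply sgM; auto. apply isF_C; auto. apply isF_C; auto.
Qed.
Lemma sd_Cs x y : sd x y -> Cs x -> Cs y.
Proof.
  intros [c1 [c2 [H1 [H2 E]]]] Hx. subst y.
  apply CsM; auto. apply CsM; auto.
Qed.
Lemma sd_rp c e : Cs c -> sd e (rp (c ** e)).
Proof.
  intro Hc. destruct (rp_spec (c ** e)) as [d [Hd E]]. rewrite E. apply sd_mk; auto.
Qed.


Fixpoint valid (l : list G) : Prop :=
  match l with
  | [] => True
  | e :: l' => ~ Cs e /\ (A e \/ B e) /\ rp e = e /\ valid l' /\
      (match l' with [] => True | e' :: _ => (A e -> ~ A e') /\ (B e -> ~ B e') end)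
  end.

Definition nh (P : G -> Prop) (l : list G) : Prop := forall e l', l = e :: l' -> ~ P e.

Fixpoint actC (c : G) (l : list G) : list G :=
  match l with
  | [] => []
  | e :: l' => rp (c ** e) :: actC (inv (rp (c ** e)) ** (c ** e)) l'
  end.

Definition ins (g : G) (l : list G) : list G :=
  if dec (Cs g) then actC g l else rp g :: actC (inv (rp g) ** g) l.

Definition actP (P : G -> Prop) (g : G) (l : list G) : list G :=
  match l with
  | e :: l' => if dec (P e) then ins (g ** e) l' else ins g l
  | [] => ins g l
  end.

Lemma actC_comp l : forall c1 c2, Cs c1 -> Cs c2 -> actC c1 (actC c2 l) = actC (c1 ** c2) l.
Proof.
  induction l as [|e l IH]; intros c1 c2 H1 H2; simpl; auto.
  destruct (rp_spec (c2 ** e)) as [d [Hd E]].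
  assert (E2 : rp (c1 ** rp (c2 ** e)) = rp (c1 ** c2 ** e)).
  { rewrite E, mA. rewrite rp_coset; auto. rewrite mA; auto. }
  rewrite IH by apply rp_k. rewrite <- E2. f_equal.
  f_equal. rewrite <- !mA. rewrite mKr. auto.
Qed.

Lemma actC_1 l : valid l -> actC 1 l = l.
Proof.
  induction l as [|e l IH]; simpl; intros; auto.
  destruct H as [H1 [H2 [H3 [H4 H5]]]].
  rewrite m1l, H3, mVl. f_equal. auto.
Qed.

Definition Rn (e e' : G) : Prop := sd e e' /\ rp e' = e'.

Lemma actC_R l : forall c, Cs c -> Forall2 Rn l (actC c l).
Proof.
  induction l as [|e l IH]; intros c Hc; simpl; constructor.
  - split. apply sd_rp; auto. apply rp_idem.
  - apply IH. apply rp_k.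
Qed.

Lemma Rn_sd l l' : Forall2 Rn l l' -> Forall2 sd l l'.
Proof. intro H. induction H; constructor; auto. apply H. Qed.

Lemma sdA x y : sd x y -> (A x <-> A y).
Proof. intro H. split; intro. eapply sd_F; eauto; left; auto. eapply sd_F; [left; auto| apply sd_sym; eauto | auto]. Qed.
Lemma sdB x y : sd x y -> (B x <-> B y).
Proof. intro H. split; intro. eapply sd_F; eauto; right; auto. eapply sd_F; [right; auto| apply sd_sym; eauto | auto]. Qed.
Lemma sdC x y : sd x y -> (Cs x <-> Cs y).
Proof. intro H. split; intro. eapply sd_Cs; eauto. eapply sd_Cs; [apply sd_sym; eauto | auto]. Qed.
Lemma sdP P x y : isF P -> sd x y -> (P x <-> P y).
Proof. intros [->| ->]; [apply sdA|apply sdB]. Qed.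

Lemma valid_R l l' : Forall2 Rn l l' -> valid l -> valid l'.
Proof.
  intro H. induction H as [|e e' l l' He Hl IH]; simpl; auto.
  intros [H1 [H2 [H3 [H4 H5]]]]. destruct He as [Hs Hr].
  split; [|split; [|split; [|split]]].
  - rewrite <- (sdC _ _ Hs); auto.
  - rewrite <- (sdA _ _ Hs), <- (sdB _ _ Hs); auto.
  - auto.
  - auto.
  - destruct Hl as [|f f' m m' Hf Hm]; auto. destruct Hf as [Hf _].
    rewrite <- (sdA _ _ Hs), <- (sdB _ _ Hs), <- (sdA _ _ Hf), <- (sdB _ _ Hf). auto.
Qed.

Lemma nh_R P l l' : isF P -> Forall2 Rn l l' -> nh P l -> nh P l'.
Proof.
  intros HP H Hn e m E. subst l'. inversion H as [|x y l0 l1 Hxy Hr]; subst. intro He.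
  apply (Hn x l0 eq_refl). destruct Hxy as [Hs _]. rewrite (sdP P _ _ HP Hs). auto.
Qed.

Lemma actC_valid c l : Cs c -> valid l -> valid (actC c l).
Proof. intros. eapply valid_R; eauto. apply actC_R; auto. Qed.
Lemma actC_nh P c l : isF P -> Cs c -> nh P l -> nh P (actC c l).
Proof. intros. eapply nh_R; eauto. apply actC_R; auto. Qed.

Lemma ins_actC g k l : Cs k -> ins g (actC k l) = ins (g ** k) l.
Proof.
  intro Hk. unfold ins.
  destruct (dec (Cs g)) as [h1|h1]; destruct (dec (Cs (g ** k))) as [h2|h2].
  - apply actC_comp; auto.
  - exfalso. apply h2. apply CsM; auto.
  - exfalso. apply h1. apply (proj1 (CsM_iff g k Hk) h2).
  - rewrite rp_coset; auto. f_equal. rewrite actC_comp; auto. f_equal. rewrite mA; auto.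
    apply rp_k.
Qed.

Lemma actP_nh P g l : nh P l -> actP P g l = ins g l.
Proof.
  intro H. destruct l as [|e l]; simpl; auto. destruct (dec (P e)); auto.
  exfalso. eapply H; eauto.
Qed.

Lemma actP_decomp P l : isF P -> valid l ->
  exists g0 l0, P g0 /\ valid l0 /\ nh P l0 /\ (l0 = l \/ exists e, l = e :: l0) /\
    forall g, actP P g l = ins (g ** g0) l0.
Proof.
  intros HP Hv. assert (HS := isF_sub P HP).
  destruct l as [|e l].
  - exists 1, []. split; [apply sg1; auto|]. split; [simpl; auto|]. split.
    intros e l' E; discriminate. split; auto. intro g. rewrite m1r; auto.
  - simpl. destruct (dec (P e)) as [h|h].
    + exists e, l. destruct Hv as [H1 [H2 [H3 [H4 H5]]]].
      split; auto. split; auto. split.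
      * intros e' l' E. subst l. destruct HP as [-> | ->]; apply H5; auto.
      * split; eauto.
    + exists 1, (e :: l). split; [apply sg1; auto|]. split; auto. split.
      * intros e' l' E. injection E; intros; subst; auto.
      * split; auto. intro g. rewrite m1r; auto.
Qed.

Lemma ins_law P g1 g2 l : isF P -> P g1 -> P g2 -> valid l -> nh P l ->
  actP P g1 (ins g2 l) = ins (g1 ** g2) l.
Proof.
  intros HP H1 H2 Hv Hn. unfold ins at 1. destruct (dec (Cs g2)) as [h|h].
  - rewrite actP_nh. apply ins_actC; auto. apply actC_nh; auto.
  - simpl. destruct (dec (P (rp g2))) as [h'|h'].
    + rewrite ins_actC by apply rp_k. rewrite <- mA, rp_kK. auto.
    + exfalso. apply h'. apply rp_in; auto.
Qed.

Lemma act_law P g1 g2 l : isF P -> P g1 -> P g2 -> valid l ->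
  actP P g1 (actP P g2 l) = actP P (g1 ** g2) l.
Proof.
  intros HP H1 H2 Hv.
  destruct (actP_decomp P l HP Hv) as [g0 [l0 [Hg0 [Hv0 [Hn0 [_ E]]]]]].
  rewrite !E. rewrite ins_law; auto. rewrite mA; auto.
  apply sgM; auto. apply isF_sub; auto.
Qed.

Lemma act_1 P l : isF P -> valid l -> actP P 1 l = l.
Proof.
  intros HP Hv. destruct l as [|e l]; simpl.
  - unfold ins. destruct (dec (Cs 1)); auto. exfalso; apply n, Cs1.
  - destruct (dec (P e)) as [h|h].
    + rewrite m1l. unfold ins. destruct Hv as [H1 [H2 [H3 [H4 H5]]]].
      destruct (dec (Cs e)); [tauto|]. rewrite H3, mVl, actC_1; auto.
    + unfold ins. destruct (dec (Cs 1)) as [h'|h']; [|exfalso; apply h', Cs1].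
      apply actC_1; auto.
Qed.

Lemma ins_valid P h l : isF P -> P h -> valid l -> nh P l -> valid (ins h l).
Proof.
  intros HP Hh Hv Hn. unfold ins. destruct (dec (Cs h)) as [c|c].
  - apply actC_valid; auto.
  - assert (Hk := rp_k h).
    assert (Hn' := actC_nh P _ l HP Hk Hn).
    assert (Hv' := actC_valid _ l Hk Hv).
    simpl. split; [|split; [|split; [|split]]].
    + rewrite rp_Cs; auto.
    + destruct HP as [-> | ->]; [left|right]; apply rp_in; auto; [left|right]; auto.
    + apply rp_idem.
    + auto.
    + destruct (actC (inv (rp h) ** h) l) as [|e' m] eqn:E; auto.
      assert (~ P e') by (eapply Hn'; eauto).
      assert (P (rp h)) by (apply rp_in; auto).
      assert (~ Cs (rp h)) by (rewrite rp_Cs; auto).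
      destruct HP as [-> | ->]; split; intros; auto; exfalso; apply H1; split; auto.
Qed.

Lemma act_valid P g l : isF P -> P g -> valid l -> valid (actP P g l).
Proof.
  intros HP Hg Hv.
  destruct (actP_decomp P l HP Hv) as [g0 [l0 [Hg0 [Hv0 [Hn0 [_ E]]]]]].
  rewrite E. apply ins_valid with P; auto. apply sgM; auto. apply isF_sub; auto.
Qed.

Lemma act_C P c l : isF P -> Cs c -> valid l -> actP P c l = actC c l.
Proof.
  intros HP Hc Hv. destruct l as [|e l]; simpl.
  - unfold ins. destruct (dec (Cs c)); tauto.
  - destruct (dec (P e)) as [h|h].
    + unfold ins. destruct (dec (Cs (c ** e))) as [h'|h']; auto.
      exfalso. apply Hv. rewrite <- (mKl c e). apply CsM; auto. apply CsV; auto.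
    + unfold ins. destruct (dec (Cs c)); [|tauto]. auto.
Qed.


Definition X := {l : list G | valid l}.
Lemma X_eq (x y : X) : proj1_sig x = proj1_sig y -> x = y.
Proof. destruct x, y; simpl; intro; subst; f_equal; apply proof_irrelevance. Qed.

Record perm := Perm { pf : X -> X; pg : X -> X;
  pfg : forall x, pf (pg x) = x; pgf : forall x, pg (pf x) = x }.

Lemma perm_ext (p q : perm) : pf p = pf q -> pg p = pg q -> p = q.
Proof.
  destruct p, q; simpl; intros; subst. f_equal; apply proof_irrelevance.
Qed.

Definition pmul (p q : perm) : perm.
Proof.
  refine (Perm (fun x => pf p (pf q x)) (fun x => pg q (pg p x)) _ _).
  - intro x. rewrite pfg, pfg. auto.
  - intro x. rewrite pgf, pgf. auto.
Defined.
Definition pid : perm := Perm (fun x => x) (fun x => x) (fun x => eq_refl) (fun x => eq_refl).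
Definition pinv (p : perm) : perm := Perm (pg p) (pf p) (pgf p) (pfg p).

Definition SymG : Group.
Proof.
  refine (Build_Group perm pmul pid pinv _ _ _).
  - intros; apply perm_ext; reflexivity.
  - intros; apply perm_ext; reflexivity.
  - intros p; apply perm_ext; simpl; extensionality x; apply pgf.
Defined.

Definition actX P (HP : isF P) g (hg : P g) (x : X) : X :=
  exist _ (actP P g (proj1_sig x)) (act_valid P g _ HP hg (proj2_sig x)).

Definition permP P (HP : isF P) g (hg : P g) : perm.
Proof.
  assert (hg' : P (inv g)) by (apply sgV; auto; apply isF_sub; auto).
  refine (Perm (actX P HP g hg) (actX P HP (inv g) hg') _ _).
  - intro x. apply X_eq. simpl. rewrite act_law; auto. rewrite mVr, act_1; auto.
    apply proj2_sig. apply proj2_sig.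
  - intro x. apply X_eq. simpl. rewrite act_law; auto. rewrite mVl, act_1; auto.
    apply proj2_sig. apply proj2_sig.
Defined.

Lemma isFA : isF A. Proof. left; auto. Qed.
Lemma isFB : isF B. Proof. right; auto. Qed.

Definition f1 (g : G) : perm :=
  match dec (A g) with left h => permP A isFA g h | right _ => pid end.
Definition f2 (g : G) : perm :=
  match dec (B g) with left h => permP B isFB g h | right _ => pid end.

Lemma fP_hom P (HP : isF P) (f : G -> perm) :
  (forall g (h : P g), f g = permP P HP g h) ->
  hom_on G SymG P f.
Proof.
  intros Hf x y hx hy. assert (HS := isF_sub P HP).
  assert (hxy : P (x ** y)) by (apply sgM; auto).
  rewrite (Hf _ hxy), (Hf _ hx), (Hf _ hy).
  apply perm_ext; simpl; extensionality z; apply X_eq; simpl.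
  - rewrite act_law; auto. apply proj2_sig.
  - rewrite act_law; auto. rewrite invM; auto. apply sgV; auto. apply sgV; auto. apply proj2_sig.
Qed.

Lemma f1_hom : hom_on G SymG A f1.
Proof.
  apply fP_hom with isFA. intros g h. unfold f1. destruct (dec (A g)); [|tauto].
  f_equal. apply proof_irrelevance.
Qed.
Lemma f2_hom : hom_on G SymG B f2.
Proof.
  apply fP_hom with isFB. intros g h. unfold f2. destruct (dec (B g)); [|tauto].
  f_equal. apply proof_irrelevance.
Qed.
Lemma f12_agree c : A c -> B c -> f1 c = f2 c.
Proof.
  intros ha hb. unfold f1, f2. destruct (dec (A c)); [|tauto]. destruct (dec (B c)); [|tauto].
  apply perm_ext; simpl; extensionality z; apply X_eq; simpl.
  - assert (Cs c) by (split; auto).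
    rewrite (act_C A c), (act_C B c); auto; try apply isFA; try apply isFB; apply proj2_sig.
  - assert (Cs (inv c)) by (apply CsV; split; auto).
    rewrite (act_C A), (act_C B); auto; try apply isFA; try apply isFB; apply proj2_sig.
Qed.


Lemma F2_sym l l' : Forall2 sd l l' -> Forall2 sd l' l.
Proof. intro H; induction H; constructor; auto. apply sd_sym; auto. Qed.
Lemma F2_trans l1 : forall l2 l3, Forall2 sd l1 l2 -> Forall2 sd l2 l3 -> Forall2 sd l1 l3.
Proof.
  induction l1; intros l2 l3 H1 H2; inversion H1; subst; inversion H2; subst; constructor.
  eapply sd_trans; eauto. eauto.
Qed.

Inductive parse (v : list G) : list G -> nat -> Prop :=
 | pa_nil : parse v [] 0
 | pa_one : forall e l k, parse v l k -> parse v (e :: l) (S k)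
 | pa_blk : forall l1 l2 k, Forall2 sd v l1 -> parse v l2 k -> parse v (l1 ++ l2) (length v - 1 + k).

Definition Psi (v l : list G) : nat := natmin (parse v l).

Lemma parse_singles v a l2 k : parse v l2 k -> parse v (a ++ l2) (length a + k).
Proof. induction a; simpl; auto. intro; constructor; auto. Qed.
Lemma parse_len v l : parse v l (length l).
Proof. pose proof (parse_singles v l [] 0 (pa_nil v)) as H. rewrite app_nil_r, Nat.add_0_r in H. exact H. Qed.


Lemma Psi_spec v l : parse v l (Psi v l) /\ forall k, parse v l k -> Psi v l <= k.
Proof. apply natmin_spec. exists (length l). apply parse_len. Qed.

Lemma Psi_le v l k : parse v l k -> Psi v l <= k.
Proof. apply Psi_spec. Qed.

Lemma Psi_nil v : Psi v [] = 0.
Proof. pose proof (Psi_le v [] 0 (pa_nil v)). lia. Qed.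

Lemma Psi_cons_le v e l : Psi v (e :: l) <= S (Psi v l).
Proof. apply Psi_le. constructor. apply Psi_spec. Qed.

Lemma parse_tail v e l k : v <> [] -> parse v (e :: l) k -> exists k', parse v l k' /\ k' <= k.
Proof.
  intros Hv H. inversion H as [|e0 l0 k0 H0|l1 l2 k0 Hm Hp]; subst.
  - exists k0; auto.
  - destruct l1 as [|e1 l1']. { inversion Hm; subst; tauto. }
    simpl in H0. injection H0; intros; subst.
    exists (length l1' + k0). split. apply parse_singles; auto.
    apply Forall2_length in Hm. simpl in Hm. lia.
Qed.

Lemma Psi_tail v e l : v <> [] -> Psi v l <= Psi v (e :: l).
Proof.
  intro Hv. destruct (Psi_spec v (e :: l)) as [H _].
  destruct (parse_tail v e l _ Hv H) as [k' [H1 H2]].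
  pose proof (Psi_le _ _ _ H1). lia.
Qed.

Lemma Psi_blk v l1 l2 : Forall2 sd v l1 -> Psi v (l1 ++ l2) <= length v - 1 + Psi v l2.
Proof. intro H. apply Psi_le. constructor; auto. apply Psi_spec. Qed.

Lemma parse_R v l k : parse v l k -> forall l', Forall2 sd l l' -> parse v l' k.
Proof.
  intro H. induction H; intros l' HR.
  - inversion HR; constructor.
  - inversion HR; subst. constructor; auto.
  - apply Forall2_app_inv_l in HR. destruct HR as [l1' [l2' [H1 [H2 E]]]]. subst l'.
    constructor; auto. eapply F2_trans; eauto.
Qed.

Lemma Psi_R v l l' : Forall2 sd l l' -> Psi v l = Psi v l'.
Proof.
  intro H. apply Nat.le_antisymm; apply Psi_le; eapply parse_R; try apply Psi_spec; auto.
  apply F2_sym; auto.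
Qed.

Lemma Psi_nohead v e l : v <> [] -> (forall s v', v = s :: v' -> ~ sd s e) -> Psi v (e :: l) = S (Psi v l).
Proof.
  intros Hv Hn. apply Nat.le_antisymm. apply Psi_cons_le.
  destruct (Psi_spec v (e :: l)) as [H _].
  inversion H as [|e0 l0 k0 H0|l1 l2 k0 Hm Hp]; subst.
  - pose proof (Psi_le _ _ _ H0). lia.
  - destruct l1 as [|e1 l1'].
    + inversion Hm; subst. tauto.
    + simpl in H0. injection H0; intros; subst. inversion Hm; subst. exfalso. eapply Hn; eauto.
Qed.

Lemma parse_lower v l k : parse v l k -> (length v - 1) * length l <= length v * k.
Proof.
  intro H. induction H; simpl.
  - lia.
  - destruct (length v) as [|m]; simpl in *. lia. rewrite Nat.sub_0_r in *. nia.
  - apply Forall2_length in H. rewrite length_app, <- H.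
    destruct (length v) as [|m]; simpl in *. lia. rewrite Nat.sub_0_r in *. nia.
Qed.

Lemma parse_nomatch v l k : parse v l k ->
  (forall a b c, l = a ++ b ++ c -> ~ Forall2 sd v b) -> k = length l.
Proof.
  intro H. induction H; intro Hn; simpl; auto.
  - f_equal. apply IHparse. intros a b c E. apply (Hn (e :: a) b c). rewrite E; auto.
  - exfalso. apply (Hn [] l1 l2); auto.
Qed.


Lemma eval_app (u1 u2 : list G) : eval G (u1 ++ u2) = eval G u1 ** eval G u2.
Proof. induction u1; simpl. rewrite m1l; auto. rewrite IHu1, mA; auto. Qed.

Fixpoint alt (v : list G) : Prop :=
  match v with
  | s :: v' => match v' with [] => True | s' :: _ => (A s <-> ~ A s') end /\ alt v'
  | [] => True
  end.
Definition goodL (s : G) : Prop := ~ Cs s /\ (A s \/ B s).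

Lemma actC_app l1 : forall l2 k, Cs k -> exists k', Cs k' /\ actC k (l1 ++ l2) = actC k l1 ++ actC k' l2.
Proof.
  induction l1 as [|e l1 IH]; intros l2 k Hk; simpl.
  - exists k; auto.
  - destruct (IH l2 _ (rp_k (k ** e))) as [k' [H1 H2]]. exists k'. rewrite H2; auto.
Qed.

Lemma Psi_ins v h l : Psi v (ins h l) <= S (Psi v l).
Proof.
  unfold ins. destruct (dec (Cs h)).
  - rewrite <- (Psi_R v l). lia. apply Rn_sd, actC_R; auto.
  - eapply Nat.le_trans. apply Psi_cons_le. rewrite <- (Psi_R v l). lia. apply Rn_sd, actC_R, rp_k.
Qed.

Section WithF.
Variable F : G -> perm.
Hypothesis HF : is_hom G SymG F.
Hypothesis HF1 : forall a, A a -> F a = f1 a.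
Hypothesis HF2 : forall b, B b -> F b = f2 b.

Definition lst (g : G) (x : X) : list G := proj1_sig (pf (F g) x).

Lemma F_mul g h x : pf (F (g ** h)) x = pf (F g) (pf (F h) x).
Proof. rewrite HF. reflexivity. Qed.

Lemma F_P P s x : isF P -> P s -> lst s x = actP P s (proj1_sig x).
Proof.
  intros [-> | ->] Hs; unfold lst.
  - rewrite HF1; auto. unfold f1. destruct (dec (A s)); [|tauto]. reflexivity.
  - rewrite HF2; auto. unfold f2. destruct (dec (B s)); [|tauto]. reflexivity.
Qed.

Lemma F_1 x : pf (F 1) x = x.
Proof.
  apply X_eq. fold (lst 1 x). rewrite (F_P A). apply act_1. apply isFA. apply proj2_sig.
  apply isFA. apply sg1; auto.
Qed.

Lemma F_eval_app u1 u2 x : pf (F (eval G (u1 ++ u2))) x = pf (F (eval G u1)) (pf (F (eval G u2)) x).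
Proof. rewrite eval_app, F_mul. auto. Qed.

Lemma P1 v s x : v <> [] -> (A s \/ B s) -> Psi v (lst s x) <= S (Psi v (proj1_sig x)).
Proof.
  intros Hv Hs. destruct x as [l Hl]. simpl.
  assert (HP : exists P, isF P /\ P s) by (destruct Hs; [exists A|exists B]; split; auto; [left|right]; auto).
  destruct HP as [P [HP Hs']].
  rewrite (F_P P); auto. simpl.
  destruct (actP_decomp P l HP Hl) as [g0 [l0 [Hg0 [Hv0 [Hn0 [E1 E]]]]]].
  rewrite E. eapply Nat.le_trans. apply Psi_ins.
  destruct E1 as [-> | [e ->]]; auto. pose proof (Psi_tail v e l0 Hv). lia.
Qed.

Lemma base_bound v u x : v <> [] -> is_word G A B u ->
  Psi v (lst (eval G u) x) <= Psi v (proj1_sig x) + length u.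
Proof.
  intros Hv Hu. revert x. induction Hu as [|s u Hs Hu IH]; intro x; simpl.
  - unfold lst. rewrite F_1. lia.
  - unfold lst. rewrite F_mul. fold (lst s (pf (F (eval G u)) x)).
    eapply Nat.le_trans. apply P1; auto. apply Hs. specialize (IH x). unfold lst in IH. lia.
Qed.


Lemma eval_cons (s : G) u : eval G (s :: u) = s ** eval G u.
Proof. reflexivity. Qed.

Lemma sd_rp1 s : sd s (rp s).
Proof. destruct (rp_spec s) as [c [Hc E]]. rewrite E. rewrite <- (m1l s) at 2. apply sd_mk; auto. apply Cs1. Qed.


Lemma ins_lemma (v' : list G) : forall s x, Forall goodL (s :: v') -> alt (s :: v') ->
  (forall P, isF P -> P (last (s :: v') 1) -> nh P (proj1_sig x)) ->
  exists l1 l2, lst (eval G (s :: v')) x = l1 ++ l2 /\ Forall2 sd (s :: v') l1 /\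
    Forall2 sd (proj1_sig x) l2.
Proof.
  induction v' as [|s' v'' IH]; intros s x Hg Ha Hl.
  - inversion Hg as [|? ? [Hc Hs] _]; subst. rewrite eval_cons. unfold lst. rewrite F_mul.
    change (eval G []) with (@gone G). rewrite F_1.
    assert (HP : exists P, isF P /\ P s) by (destruct Hs; [exists A|exists B]; split; auto; [left|right]; auto).
    destruct HP as [P [HP Hs']]. fold (lst s x). rewrite (F_P P); auto.
    rewrite actP_nh by (apply Hl; auto). unfold ins. destruct (dec (Cs s)); [tauto|].
    exists [rp s], (actC (inv (rp s) ** s) (proj1_sig x)). split; auto. split.
    constructor; auto. apply sd_rp1. apply Rn_sd, actC_R, rp_k.
  - inversion Hg as [|? ? [Hc Hs] Hg']; subst. destruct Ha as [Has Ha'].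
    destruct (IH s' x Hg' Ha') as [l1 [l2 [E [H1 H2]]]].
    { intros P HP HPl. apply Hl; auto. }
    rewrite (eval_cons s). unfold lst. rewrite F_mul. fold (lst s (pf (F (eval G (s' :: v''))) x)).
    inversion Hg' as [|? ? [Hc' Hs'] _]; subst.
    inversion H1 as [|? e1 ? l1' He1 Hl1']; subst.
    assert (HP : exists P, isF P /\ P s /\ ~ P e1).
    { destruct (classic (A s)) as [h|h].
      - exists A. split. apply isFA. split; auto. rewrite <- (sdA _ _ He1). tauto.
      - exists B. split. apply isFB. split. tauto.
        assert (A s') by (destruct (classic (A s')); tauto).
        intro Hb. apply Hc'. split; auto. rewrite (sdB _ _ He1); auto. }
    destruct HP as [P [HP [Hs1 He1']]].
    rewrite (F_P P); auto. unfold lst in E. rewrite E.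
    rewrite actP_nh. 2: { intros e m Em. injection Em; intros; subst; auto. }
    unfold ins. destruct (dec (Cs s)); [tauto|].
    destruct (actC_app (e1 :: l1') l2 _ (rp_k s)) as [k' [Hk' Eapp]]. rewrite Eapp.
    exists (rp s :: actC (inv (rp s) ** s) (e1 :: l1')), (actC k' l2). split; auto. split.
    + constructor. apply sd_rp1. eapply F2_trans. exact H1. apply Rn_sd, actC_R, rp_k.
    + eapply F2_trans. exact H2. apply Rn_sd, actC_R; auto.
Qed.


Lemma good_word u : Forall goodL u -> is_word G A B u.
Proof.
  intro H. induction H; constructor; auto. destruct H as [H1 H2]. split; auto.
  intro E. apply H1. rewrite E. apply Cs1.
Qed.

Lemma last_in {T} (l : list T) d : l <> [] -> In (last l d) l.
Proof. intro H. pose proof (app_removelast_last d H) as E. rewrite E at 2. apply in_or_app. right; left; auto. Qed.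

Definition endsOK (v : list G) : Prop := A (hd 1 v) <-> ~ A (last v 1).

Lemma P2 v x : v <> [] -> Forall goodL v -> alt v -> endsOK v ->
  Psi v (lst (eval G v) x) + 1 <= Psi v (proj1_sig x) + length v.
Proof.
  intros Hv Hg Ha He.
  assert (Hgl : goodL (last v 1)).
  { rewrite Forall_forall in Hg. apply Hg. apply last_in; auto. }
  destruct v as [|s v']; [tauto|].
  assert (Hgs : goodL s) by (inversion Hg; auto).
  set (sl := last (s :: v') 1) in *.
  destruct x as [l Hl]. simpl.
  destruct (classic (exists e l0, l = e :: l0 /\ (A e <-> A sl))) as [[e [l0 [El Hsame]]]|Hdiff].
  - (* first letter merges *)
    subst l.
    assert (Hge : goodL e) by (destruct Hl as [H1 [H2 _]]; split; auto).
    assert (HP : exists P, isF P /\ P e /\ P sl).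
    { destruct (classic (A e)) as [h|h].
      - exists A. split. apply isFA. split; tauto.
      - exists B. split. apply isFB. destruct Hge as [_ [|]]; [tauto|]. split; auto.
        destruct Hgl as [_ [|]]; tauto. }
    destruct HP as [P [HP [HPe HPsl]]].
    pose proof (app_removelast_last 1 (l:=s :: v') ltac:(discriminate)) as Ev.
    fold sl in Ev. set (v0 := removelast (s :: v')) in *.
    assert (Hlen : length (s :: v') = length v0 + 1).
    { rewrite Ev at 1. rewrite length_app. simpl. lia. }
    assert (Hw0 : is_word G A B v0).
    { apply good_word. rewrite Ev in Hg. apply Forall_app in Hg. tauto. }
    unfold lst. replace (s ** eval G v') with (eval G (v0 ++ [sl])) by (rewrite <- Ev; auto).
    simpl in Hlen.
    rewrite F_eval_app.
    fold (lst (eval G v0) (pf (F (eval G [sl])) (exist (fun l => valid l) (e :: l0) Hl))).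
    eapply Nat.le_trans. apply Nat.add_le_mono_r. apply base_bound; auto.
    assert (Hsl : Psi (s :: v') (proj1_sig (pf (F (eval G [sl])) (exist (fun l => valid l) (e :: l0) Hl)))
                  <= Psi (s :: v') (e :: l0)).
    { rewrite eval_cons. rewrite F_mul. change (eval G []) with (@gone G). rewrite F_1.
      fold (lst sl (exist (fun l => valid l) (e :: l0) Hl)). rewrite (F_P P); auto. simpl.
      destruct (dec (P e)) as [_|h]; [|tauto].
      rewrite Psi_nohead; auto. apply Psi_ins.
      intros s0 v0' E Hsd. injection E; intros; subst s0.
      unfold endsOK in He. simpl in He. fold sl in He.
      destruct Hge as [Hce Hfe].
      rewrite (sdA _ _ Hsd) in He. tauto. }
    lia.
  - (* pure insertion *)
    assert (Hnh : forall P, isF P -> P sl -> nh P l).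
    { intros P HP HPsl e l0 El HPe. apply Hdiff. exists e, l0. split; auto.
      subst l. destruct Hl as [H1 [H2 _]].
      destruct Hgl as [Hc2 H3].
      destruct HP as [-> | ->]; split; intro; auto.
      - exfalso; apply H1; split; auto.
      - exfalso; apply Hc2; split; auto. }
    destruct (ins_lemma v' s (exist (fun l => valid l) l Hl) Hg Ha Hnh) as [l1 [l2 [E [H1 H2]]]].
    rewrite eval_cons in E; rewrite E. eapply Nat.le_trans. apply Nat.add_le_mono_r. apply Psi_blk. exact H1.
    rewrite <- (Psi_R _ _ _ H2). simpl. lia.
Qed.


Lemma main_bound v : v <> [] -> Forall goodL v -> alt v -> endsOK v ->
  forall k u x, is_word G A B u -> has_occ v u k ->
  Psi v (lst (eval G u) x) + k <= Psi v (proj1_sig x) + length u.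
Proof.
  intros Hv Hg Ha He k. induction k as [|k IH]; intros u x Hu Ho.
  - pose proof (base_bound v u x Hv Hu). lia.
  - destruct Ho as [a [b [E Hb]]]. subst u.
    unfold is_word in Hu. apply Forall_app in Hu. destruct Hu as [Hua Hu].
    apply Forall_app in Hu. destruct Hu as [Huv Hub].
    unfold lst. rewrite !F_eval_app.
    set (z := pf (F (eval G b)) x). set (y := pf (F (eval G v)) z).
    pose proof (base_bound v a y Hv Hua) as H1.
    pose proof (P2 v z Hv Hg Ha He) as H2.
    pose proof (IH b x Hub Hb) as H3.
    unfold lst in *. fold y in H2. fold z in H3.
    rewrite !length_app. lia.
Qed.


Definition x0 : X := exist (fun l => valid l) [] I.

Definition Mv (v : list G) (g : G) : nat :=
  natmin (fun m => exists u, is_word G A B u /\ eval G u = g /\ m = (length u - occ v u)%nat).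

Lemma has_occ_len (v u : list G) k : v <> [] -> has_occ v u k -> k <= length u.
Proof.
  intro Hv. revert u. induction k; intros u H; simpl in *. lia.
  destruct H as [a [b [E H]]]. subst u. specialize (IHk b H).
  rewrite !length_app. destruct v; [tauto|]. simpl. lia.
Qed.

Lemma occ_spec (v u : list G) : v <> [] -> has_occ v u (occ v u) /\ forall k, has_occ v u k -> k <= occ v u.
Proof.
  intro Hv. apply natmax_spec. exists 0; simpl; auto.
  exists (length u). intros k Hk. eapply has_occ_len; eauto.
Qed.

Lemma Mv_lower v g : v <> [] -> Forall goodL v -> alt v -> endsOK v ->
  (exists u, is_word G A B u /\ eval G u = g) -> Psi v (lst g x0) <= Mv v g.
Proof.
  intros Hv Hg Ha He [u0 [Hu0 Eu0]].
  destruct (natmin_spec (fun m => exists u, is_word G A B u /\ eval G u = g /\ m = (length u - occ v u)%nat))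
    as [[u [Hu [Eu Em]]] _].
  { exists (length u0 - occ v u0). exists u0; auto. }
  unfold Mv. rewrite Em. subst g.
  destruct (occ_spec v u Hv) as [Ho _].
  pose proof (main_bound v Hv Hg Ha He (occ v u) u x0 Hu Ho) as H.
  change (proj1_sig x0) with (@nil G) in H. rewrite Psi_nil, Eu in H. lia.
Qed.

Lemma Mv_upper v u k : v <> [] -> is_word G A B u -> has_occ v u k -> Mv v (eval G u) <= length u - k.
Proof.
  intros Hv Hu Ho.
  destruct (natmin_spec (fun m => exists u', is_word G A B u' /\ eval G u' = eval G u /\ m = (length u' - occ v u')%nat))
    as [_ Hmin].
  { exists (length u - occ v u). exists u; auto. }
  unfold Mv. eapply Nat.le_trans. apply Hmin. exists u; auto.
  destruct (occ_spec v u Hv) as [_ H]. specialize (H k Ho). lia.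
Qed.

Lemma has_occ_pow (v : list G) n : has_occ v (wpow G v n) n.
Proof.
  induction n; simpl; auto. exists [], (wpow G v n). split; auto.
Qed.

Lemma F2_nth {T1 T2} (R : T1 -> T2 -> Prop) l l' d d' : Forall2 R l l' ->
  forall j, j < length l -> R (nth j l d) (nth j l' d').
Proof.
  intro H. induction H; intros j Hj; simpl in *. lia.
  destruct j; auto. apply IHForall2. lia.
Qed.

Section Letters.
Variables p q b : G.
Hypothesis Hp : A p /\ ~ Cs p.
Hypothesis Hq : A q /\ ~ Cs q.
Hypothesis Hb : B b /\ ~ Cs b.

Definition io (a : ltr) : G :=
  match a with Lp => p | LP => inv p | Lq => q | LQ => inv q | Lb => b | LB => inv b end.
Definition isA (a : ltr) : bool :=
  match a with Lp | LP | Lq | LQ => true | _ => false end.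

Lemma notC_inv x : ~ Cs x -> ~ Cs (inv x).
Proof. intros H H'. apply H. rewrite <- invK. apply CsV; auto. Qed.

Lemma io_good a : goodL (io a).
Proof.
  destruct Hp as [Hp1 Hp2], Hq as [Hq1 Hq2], Hb as [Hb1 Hb2].
  destruct a; simpl; split; try apply notC_inv; auto.
  - left. apply (sgV _ HA); auto.
  - left. apply (sgV _ HA); auto.
  - right. apply (sgV _ HB); auto.
Qed.

Lemma io_A a : A (io a) <-> isA a = true.
Proof.
  destruct Hp, Hq, Hb.
  destruct a; simpl; split; intro; auto; try (apply sgV; auto); try discriminate.
  - exfalso. apply H4. split; auto.
  - exfalso. apply H4. split. apply sgVr; auto. apply sgVr; auto. apply sgV; auto.
Qed.

Lemma io_inv a : io (linv1 a) = inv (io a).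
Proof. destruct a; simpl; auto; rewrite invK; auto. Qed.

Lemma map_linv u : winv G (map io u) = map io (linv u).
Proof.
  unfold winv, linv. rewrite map_rev, map_map, map_map. f_equal.
  apply map_ext. intro a. symmetry. apply io_inv.
Qed.

Lemma map_pow u n : wpow G (map io u) n = map io (lpow u n).
Proof. unfold wpow, lpow. rewrite concat_map, map_repeat. auto. Qed.

Fixpoint altS (t : bool) (u : list ltr) : Prop :=
  match u with [] => True | a :: u' => isA a = t /\ altS (negb t) u' end.

Lemma altS_app u1 : forall t u2, altS t u1 ->
  altS (if Nat.even (length u1) then t else negb t) u2 -> altS t (u1 ++ u2).
Proof.
  induction u1 as [|a u1 IH]; intros t u2 H1 H2. simpl in *; auto.
  change (length (a :: u1)) with (S (length u1)) in H2.
  destruct H1 as [Ha H1]. simpl. split; auto. apply IH; auto.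
  rewrite Nat.even_succ, <- Nat.negb_even in H2.
  destruct (Nat.even (length u1)), t; simpl in *; auto.
Qed.

Lemma altS_flat (f : bool -> list ltr) t l : (forall b, altS t (f b) /\ length (f b) = 4) ->
  altS t (flat_map f l).
Proof.
  intro H. induction l; simpl; auto. apply altS_app. apply H. destruct (H a) as [_ ->]. simpl. auto.
Qed.

Lemma altS_pow t u n : altS t u -> Nat.even (length u) = true -> altS t (concat (repeat u n)).
Proof.
  intros H He. induction n; simpl; auto. apply altS_app; auto. rewrite He; auto.
Qed.

Lemma altS_ws k : altS true (ws k).
Proof. apply altS_flat. intro b'; destruct b'; simpl; repeat split. Qed.
Lemma altS_linvws k : altS false (linv (ws k)).
Proof. unfold ws. rewrite linv_flat_map. apply altS_flat. intro b'; destruct b'; simpl; repeat split. Qed.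

Lemma even4 m : Nat.even (4 * m) = true.
Proof. rewrite Nat.even_mul. reflexivity. Qed.

Lemma alt_map t u : altS t u -> alt (map io u).
Proof.
  revert t. induction u as [|a u IH]; intros t H; simpl; auto.
  destruct H as [Ha H]. split; [|apply (IH _ H)].
  destruct u as [|a' u']; simpl; auto. destruct H as [Ha' _].
  rewrite !io_A, Ha, Ha'. destruct t; simpl; split; intro; auto; try discriminate.
  all: exfalso; auto.
Qed.

Lemma altS_last t u : altS t u -> u <> [] ->
  isA (last u Lb) = (if Nat.even (length u) then negb t else t).
Proof.
  revert t. induction u as [|a u IH]; intros t H Hn; [tauto|].
  destruct H as [Ha H]. destruct u as [|a' u'].
  - simpl. auto.
  - change (last (a :: a' :: u') Lb) with (last (a' :: u') Lb).
    rewrite (IH _ H ltac:(discriminate)).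
    change (length (a :: a' :: u')) with (S (length (a' :: u'))).
    rewrite Nat.even_succ, <- Nat.negb_even.
    destruct (Nat.even (length (a' :: u'))), t; auto.
Qed.

Lemma last_map_ne {T1 T2} (f : T1 -> T2) l d d' : l <> [] -> last (map f l) d' = f (last l d).
Proof.
  induction l as [|a l IH]; intro H; [tauto|]. destruct l as [|a' l']; simpl; auto.
  simpl in IH. apply IH. discriminate.
Qed.

Lemma endsOK_map t u : altS t u -> u <> [] -> Nat.even (length u) = true -> endsOK (map io u).
Proof.
  intros H Hn He. unfold endsOK.
  rewrite (last_map_ne io u Lb) by auto. rewrite (io_A (last u Lb)), (altS_last t u H Hn), He.
  destruct u as [|a u']; [tauto|]. simpl hd. destruct H as [Ha _].
  rewrite !io_A, Ha. destruct t; simpl; split; intro; try discriminate; auto; exfalso; auto.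
Qed.

Lemma goodmap u : Forall goodL (map io u).
Proof. apply Forall_forall. intros x Hx. apply in_map_iff in Hx. destruct Hx as [a [<- _]]. apply io_good. Qed.

Lemma wordmap u : is_word G A B (map io u).
Proof. apply good_word, goodmap. Qed.

Section Col2.
Variable col : ltr -> nat.
Hypothesis Hc : forall a a', sd (io a) (io a') -> col a = col a'.

Lemma transfer V TL l : Forall2 sd (map io TL) l -> (forall o, ~ matchAt col V TL o) ->
  forall a b' c, l = a ++ b' ++ c -> ~ Forall2 sd (map io V) b'.
Proof.
  intros HT Hno a0 b0 c0 E Hm. subst l.
  apply Forall2_app_inv_r in HT. destruct HT as [Ta [Tbc [H1 [H2 E1]]]].
  apply Forall2_app_inv_r in H2. destruct H2 as [Tb [Tc [H3 [H4 E2]]]]. subst Tbc.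
  assert (HVb : Forall2 sd (map io V) Tb) by (eapply F2_trans; [exact Hm| apply F2_sym; auto]).
  apply (Hno (length Ta)). split.
  - apply (f_equal (@length G)) in E1. rewrite length_map, !length_app in E1.
    apply Forall2_length in HVb. rewrite length_map in HVb. lia.
  - intros j Hj. apply Hc.
    assert (Hj' : j < length (map io V)) by (rewrite length_map; auto).
    pose proof (F2_nth sd _ _ (io Lb) (io Lb) HVb j Hj') as Hs.
    rewrite map_nth in Hs.
    assert (Hlb : length Tb = length V) by (apply Forall2_length in HVb; rewrite length_map in HVb; auto).
    replace (nth j Tb (io Lb)) with (nth (length Ta + j) (map io TL) (io Lb)) in Hs.
    + rewrite map_nth in Hs. auto.
    + rewrite E1. rewrite app_nth2 by lia. replace (length Ta + j - length Ta) with j by lia.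
      rewrite app_nth1 by lia. auto.
Qed.

Hypothesis col_p : col Lp = 0.
Hypothesis col_q : col Lq = S 0.
Hypothesis col_b : col Lb = 2.
Hypothesis col_B : col LB = 2.
Hypothesis col_PQ : (col LP = 0 /\ col LQ = S 0) \/ (col LP = S 0 /\ col LQ = 0).

Lemma lpow_len (u : list ltr) n : length (lpow u n) = n * length u.
Proof. unfold lpow. induction n; simpl; auto. rewrite length_app, IHn. lia. Qed.

Lemma text_F2 k n : 0 < n ->
  Forall2 sd (map io (lpow (ws k) n)) (lst (eval G (map io (lpow (ws k) n))) x0).
Proof.
  intro Hn.
  assert (Hne : map io (lpow (ws k) n) <> []).
  { intro E. apply (f_equal (@length G)) in E. rewrite length_map, lpow_len, ws_len in E. simpl in E. nia. }
  assert (Hg := goodmap (lpow (ws k) n)).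
  assert (Ha := alt_map true (lpow (ws k) n) (altS_pow true (ws k) n (altS_ws k) ltac:(rewrite ws_len; apply even4))).
  destruct (map io (lpow (ws k) n)) as [|s v'] eqn:E; [tauto|].
  destruct (ins_lemma v' s x0 Hg Ha) as [l1 [l2 [E1 [H1 H2]]]].
  { intros P HP _ e l' El. discriminate. }
  rewrite E1. inversion H2; subst. rewrite app_nil_r. auto.
Qed.

Lemma h_w_Mv w g : h_w G A B w g = (Z.of_nat (Mv (winv G w) g) - Z.of_nat (Mv w g))%Z.
Proof. unfold h_w, c_w, Mv. lia. Qed.

Lemma Mv_nomatch k n V t : 0 < n -> altS t V -> V <> [] -> Nat.even (length V) = true ->
  (forall o, ~ matchAt col V (lpow (ws k) n) o) ->
  Mv (map io V) (eval G (map io (lpow (ws k) n))) = length (lpow (ws k) n).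
Proof.
  intros Hn HaV HV He Hno.
  assert (HV' : map io V <> []) by (destruct V; simpl; [tauto|discriminate]).
  apply Nat.le_antisymm.
  - pose proof (Mv_upper (map io V) (map io (lpow (ws k) n)) 0 HV' (wordmap _) I) as H.
    rewrite length_map in H. lia.
  - eapply Nat.le_trans; [|apply Mv_lower].
    + pose proof (text_F2 k n Hn) as HT.
      set (l := lst (eval G (map io (lpow (ws k) n))) x0) in *.
      destruct (Psi_spec (map io V) l) as [Hpa _].
      rewrite (parse_nomatch _ _ _ Hpa).
      * apply Forall2_length in HT. rewrite length_map in HT. lia.
      * eapply transfer; eauto.
    + auto.
    + apply goodmap.
    + eapply alt_map; eauto.
    + eapply endsOK_map; eauto.
    + exists (map io (lpow (ws k) n)). split; auto. apply wordmap.
Qed.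

Lemma Mv_self k n : 0 < n ->
  Mv (map io (ws k)) (eval G (map io (lpow (ws k) n))) = length (lpow (ws k) n) - n.
Proof.
  intros Hn.
  assert (HW : length (map io (ws k)) = 4 * (k + 4)) by (rewrite length_map, ws_len; auto).
  assert (HV' : map io (ws k) <> []) by (intro E; rewrite E in HW; simpl in HW; lia).
  rewrite lpow_len, ws_len.
  apply Nat.le_antisymm.
  - pose proof (Mv_upper (map io (ws k)) (map io (lpow (ws k) n)) n HV' (wordmap _)) as H.
    rewrite <- map_pow in H. specialize (H (has_occ_pow _ n)).
    rewrite map_pow, length_map, lpow_len, ws_len in H. auto.
  - eapply Nat.le_trans; [|apply Mv_lower].
    + pose proof (text_F2 k n Hn) as HT.
      set (l := lst (eval G (map io (lpow (ws k) n))) x0) in *.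
      destruct (Psi_spec (map io (ws k)) l) as [Hpa _].
      pose proof (parse_lower _ _ _ Hpa) as Hl.
      apply Forall2_length in HT. rewrite length_map, lpow_len, ws_len in HT. rewrite <- HT in Hl.
      rewrite HW in Hl. set (ps := Psi (map io (ws k)) l) in *.
      assert (H4 : (4 * (k + 4) - S 0) * n <= ps).
      { apply (Nat.mul_le_mono_pos_l _ _ (4 * (k + 4))). lia. nia. }
      nia.
    + auto.
    + apply goodmap.
    + eapply alt_map. apply altS_ws.
    + eapply endsOK_map. apply altS_ws. intro E; rewrite E in HV'; tauto. rewrite ws_len; apply even4.
    + exists (map io (lpow (ws k) n)). split; auto. apply wordmap.
Qed.

Lemma res1 k n : 2 <= k -> 0 < n ->
  h_w G A B (map io (ws k)) (eval G (wpow G (map io (ws k)) n)) = Z.of_nat n.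
Proof.
  intros Hk Hn. rewrite h_w_Mv, map_linv, map_pow.
  rewrite (Mv_nomatch k n (linv (ws k)) false Hn).
  - rewrite Mv_self by auto. rewrite lpow_len, ws_len. nia.
  - apply altS_linvws.
  - intro E. apply (f_equal (@length ltr)) in E. rewrite linv_len, ws_len in E. simpl in E. lia.
  - rewrite linv_len, ws_len. apply even4.
  - intro o. eapply noA; eauto.
Qed.

Lemma res2 k k' n : 2 <= k -> k < k' -> 0 < n ->
  h_w G A B (map io (ws k')) (eval G (wpow G (map io (ws k)) n)) = 0%Z.
Proof.
  intros Hk Hkk Hn. rewrite h_w_Mv, map_linv, map_pow.
  rewrite (Mv_nomatch k n (linv (ws k')) false Hn).
  rewrite (Mv_nomatch k n (ws k') true Hn). lia.
  - apply altS_ws.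
  - intro E. apply (f_equal (@length ltr)) in E. rewrite ws_len in E. simpl in E. lia.
  - rewrite ws_len. apply even4.
  - intro o. eapply noB1; eauto.
  - apply altS_linvws.
  - intro E. apply (f_equal (@length ltr)) in E. rewrite linv_len, ws_len in E. simpl in E. lia.
  - rewrite linv_len, ws_len. apply even4.
  - intro o. eapply noB2; eauto.
Qed.

End Col2.

End Letters.

Lemma finish p q b col :
  A p /\ ~ Cs p -> A q /\ ~ Cs q -> B b /\ ~ Cs b ->
  (forall a a', sd (io p q b a) (io p q b a') -> col a = col a') ->
  col Lp = 0 -> col Lq = S 0 -> col Lb = 2 -> col LB = 2 ->
  (col LP = 0 /\ col LQ = S 0) \/ (col LP = S 0 /\ col LQ = 0) ->
  exists w : nat -> list G,
    (forall i, is_word G A B (w i) /\ w i <> nil) /\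
    (forall i n, S 0 <= n ->
       h_w G A B (w i) (eval G (wpow G (w i) n)) = Z.of_nat n) /\
    (forall i j n, i < j -> S 0 <= n ->
       h_w G A B (w j) (eval G (wpow G (w i) n)) = 0%Z) /\
    (forall i, in_derived G (eval G (w i))).
Proof.
  intros Hp Hq Hb Hc c1 c2 c3 c4 c5.
  exists (fun i => map (io p q b) (ws (i + 3))). split; [|split; [|split]].
  - intro i. split. apply wordmap; auto.
    intro E. apply (f_equal (@length G)) in E. rewrite length_map, ws_len in E. simpl in E. lia.
  - intros i n Hn. eapply res1; eauto; lia.
  - intros i j n Hij Hn. eapply res2; eauto; lia.
  - intro i. unfold ws. generalize (cbits (i + 3)). intro l. induction l as [|a l IH].
    + simpl. constructor.
    + change (flat_map chunk (a :: l)) with (chunk a ++ flat_map chunk l).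
      rewrite map_app, eval_app. constructor; auto.
      assert (E : forall x y : G, eval G [x; y; inv x; inv y] = commutator G (inv x) (inv y)).
      { intros. unfold commutator. simpl. rewrite !invK, m1r, !mA. auto. }
      destruct a; simpl map; rewrite E; constructor.
Qed.

End WithF.

Lemma sd_inv x y : sd x y -> sd (inv x) (inv y).
Proof.
  intros [c1 [c2 [H1 [H2 E]]]]. subst y. exists (inv c2), (inv c1).
  split; [apply CsV; auto|split; [apply CsV; auto|]]. rewrite !invM, mA. auto.
Qed.

Lemma sd_C x y : Cs x -> Cs y -> sd x y.
Proof.
  intros Hx Hy. exists (y ** inv x), 1. split; [apply CsM; auto; apply CsV; auto|split; [apply Cs1|]].
  rewrite m1r, mKr'. auto.
Qed.

Lemma sd_AB x y : A x -> ~ Cs x -> B y -> ~ sd x y.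
Proof.
  intros Hx Hc Hy Hs. apply Hc. apply (proj2 (sdC _ _ Hs)). split; auto.
  apply (proj1 (sdA _ _ Hs)); auto.
Qed.

Lemma Hc_gen p q b col : A p /\ ~ Cs p -> A q /\ ~ Cs q -> B b /\ ~ Cs b ->
  col Lb = 2 -> col LB = 2 ->
  (forall a a', isA a = true -> isA a' = true -> col a <> col a' -> ~ sd (io p q b a) (io p q b a')) ->
  forall a a', sd (io p q b a) (io p q b a') -> col a = col a'.
Proof.
  intros Hp Hq Hb cb1 cb2 Hx a a' Hs.
  destruct (isA a) eqn:Ea; destruct (isA a') eqn:Ea'.
  - destruct (Nat.eq_dec (col a) (col a')) as [|ne]; auto. exfalso. exact (Hx a a' Ea Ea' ne Hs).
  - exfalso. destruct (io_good p q b Hp Hq Hb a') as [Hc' Hf'].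
    assert (~ A (io p q b a')) by (rewrite io_A; auto; rewrite Ea'; discriminate).
    destruct (io_good p q b Hp Hq Hb a) as [Hc0 _].
    eapply (sd_AB (io p q b a) (io p q b a')); eauto. apply io_A; auto. tauto.
  - exfalso. destruct (io_good p q b Hp Hq Hb a) as [Hc' Hf'].
    assert (~ A (io p q b a)) by (rewrite io_A; auto; rewrite Ea; discriminate).
    destruct (io_good p q b Hp Hq Hb a') as [Hc0 _].
    eapply (sd_AB (io p q b a') (io p q b a)); eauto. apply io_A; auto. tauto. apply sd_sym; auto.
  - destruct a; destruct a'; simpl in *; try discriminate; congruence.
Qed.

End Amalg.

Definition col1 (a : ltr) : nat := match a with Lp | LP => 0 | Lq | LQ => 1 | _ => 2 end.
Definition col2 (a : ltr) : nat := match a with Lp | LQ => 0 | LP | Lq => 1 | _ => 2 end.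

Theorem proposition2 (G : Group) (A B : G -> Prop) :
  is_amalgam G A B ->
  at_least_3_double_cosets G (fun x => A x /\ B x) A ->
  at_least_2_left_cosets G B (fun x => A x /\ B x) ->
  exists w : nat -> list G,
    (forall i, is_word G A B (w i) /\ w i <> nil) /\
    (forall i n, 1 <= n ->
       h_w G A B (w i) (eval G (wpow G (w i) n)) = Z.of_nat n) /\
    (forall i j n, i < j -> 1 <= n ->
       h_w G A B (w j) (eval G (wpow G (w i) n)) = 0%Z) /\
    (forall i, in_derived G (eval G (w i))).
Proof.
  intros [HA [HB Hu]] H3 H2.
  destruct (Hu (SymG G A B) (f1 G A B HA HB) (f2 G A B HA HB) (f1_hom G A B HA HB) (f2_hom G A B HA HB)
              (f12_agree G A B HA HB)) as [[F [HF [HF1 HF2]]] _].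
  destruct H2 as [b1 [b2 [Hb1 [Hb2 Hn]]]].
  set (b := gmul (ginv b1) b2).
  assert (Hb : B b /\ ~ Cs G A B b).
  { split. apply (sgM G B HB). apply (sgV G B HB); auto. auto.
    intro Hc. apply Hn. exists b. split; auto. unfold b. rewrite mKr. auto. }
  assert (Hxy : exists x y, (A x /\ ~ Cs G A B x) /\ (A y /\ ~ Cs G A B y) /\ ~ sd G A B x y).
  { destruct H3 as [a1 [a2 [a3 [Ha1 [Ha2 [Ha3 [N12 [N13 N23]]]]]]]].
    destruct (classic (Cs G A B a1)) as [C1|C1].
    - exists a2, a3. split; [split; auto|split; [split; auto|auto]].
      + intro C2. apply N12. apply sd_C; auto.
      + intro C3. apply N13. apply sd_C; auto.
    - destruct (classic (Cs G A B a2)) as [C2|C2].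
      + exists a1, a3. split; [split; auto|split; [split; auto|auto]].
        intro C3. apply N23. apply sd_C; auto.
      + exists a1, a2. split; [split; auto|split; [split; auto|auto]]. }
  destruct Hxy as [x [y [Hx [Hy Nxy]]]].
  assert (HV : forall p, A p /\ ~ Cs G A B p -> A (ginv p) /\ ~ Cs G A B (ginv p)).
  { intros p [H1 H4]. split. apply (sgV G A HA); auto. apply notC_inv; auto. }
  destruct (classic (sd G A B x (ginv x))) as [Sx|Sx].
  2: { apply (finish G A B HA HB F HF HF1 HF2 x (ginv x) b col2 Hx (HV x Hx) Hb); auto.
    apply Hc_gen; auto. intros a a' Ea Ea' Hne.
    destruct a; destruct a'; simpl in *; try discriminate; try congruence;
      rewrite ?invK; intro Hs; apply Sx; auto using sd_sym. }
  destruct (classic (sd G A B y (ginv y))) as [Sy|Sy].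
  2: { apply (finish G A B HA HB F HF HF1 HF2 y (ginv y) b col2 Hy (HV y Hy) Hb); auto.
    apply Hc_gen; auto. intros a a' Ea Ea' Hne.
    destruct a; destruct a'; simpl in *; try discriminate; try congruence;
      rewrite ?invK; intro Hs; apply Sy; auto using sd_sym. }
  apply (finish G A B HA HB F HF HF1 HF2 x y b col1 Hx Hy Hb); auto.
  apply Hc_gen; auto. intros a a' Ea Ea' Hne.
  destruct a; destruct a'; simpl in *; try discriminate; try congruence; intro Hs; apply Nxy.
  all: eauto using sd_trans, sd_sym.
Qed.
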